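(* Let $(\mathcal A,\lambda_0,S_0)$ be a substitution datum over a dilation datum $(G,d,(D_\lambda)_{\lambda>0},\Gamma,V)$, $D:=D_{\lambda_0}$. Then there is a unique map $S:\mathcal A^{**}_\Gamma\to\mathcal A^{**}_\Gamma$ satisfying: (E1) $S(P_a)=S_0(a)$ for all $a\in\mathcal A$; (E2) for all $\gamma\in\Gamma$ and $P\in\mathcal A^{**}_\Gamma$: $\mathrm{supp}(S(\gamma P))=D(\gamma)\,\mathrm{supp}(S(P))$ and $S(\gamma P)=D(\gamma)S(P)$; (E3) if $(M_i)_{i\in I}$ are subsets of $\Gamma$ with $M=\bigcup_iM_i$ and $P\in\mathcal A^M$, then $\mathrm{supp}(S(P))=\bigcup_i\mathrm{supp}(S(P|_{M_i}))$ and $S(P)(\gamma)=S(P|_{M_i})(\gamma)$ for all $i$ and all $\gamma\in\mathrm{supp}(S(P|_{M_i}))$. This map is the substitution map of Construction below, it satisfies $S^n(\gamma P)=D^n(\gamma)S^n(P)$ for all $P$, $\gamma\in\Gamma$, $n\in\mathbb N$, it maps $\mathcal A^\Gamma$ into $\mathcal A^\Gamma$, and its restriction $S:\mathcal A^\Gamma\to\mathcal A^\Gamma$ is continuous for the product topology.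
   Context: Dilation datum $(G,d,(D_\lambda),\Gamma,V)$: $G$ connected lcsc group, $d$ left-invariant metric inducing the topology, $\lambda\mapsto D_\lambda$ homomorphism $(\mathbb R_{>0},\cdot)\to\mathrm{Aut}(G)$ with $d(D_\lambda g,D_\lambda h)=\lambda d(g,h)$; $\Gamma$ uniform lattice with $D_\lambda(\Gamma)\subset\Gamma$ for some $\lambda>1$; $V$ bounded Borel set containing an open identity neighbourhood with $G=\bigsqcup_{\gamma\in\Gamma}\gamma V$. Substitution datum $(\mathcal A,\lambda_0,S_0)$: finite $\mathcal A$; $\lambda_0>1+r_+/r_-$ for some $0<r_-<r_+$ with $B(e,r_-)\subset V\subset B(e,r_+)$; $D_{\lambda_0}(\Gamma)\subset\Gamma$; $S_0:\mathcal A\to\mathcal A^{D(V)\cap\Gamma}$. A patch is $P\in\mathcal A^M$ for some $M\subset\Gamma$, $\mathrm{supp}(P)=M$; $\mathcal A^{**}_\Gamma$ is the set of all patches; $P_a$ has support $\{e\}$ and value $a$; $\Gamma$ acts by $\mathrm{supp}(\gamma P)=\gamma\,\mathrm{supp}(P)$, $(\gamma P)(x)=P(\gamma^{-1}x)$; $P|_M$ is the restriction to $\mathrm{supp}(P)\cap M$. Construction: for $P$ with support $M$, $\mathrm{supp}(S(P))=D(MV)\cap\Gamma$, and for $\gamma$ in it, with the unique $\eta\in M$ such that $\gamma\in D(\eta)(D(V)\cap\Gamma)$, $S(P)(\gamma):=S_0(P(\eta))(D(\eta)^{-1}\gamma)$. *)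

(* Defs.v *)
From Stdlib Require Import Reals List ClassicalDescription.
Open Scope R_scope.
Set Implicit Arguments.

Section Topology.
Variable G : Type.
Variable d : G -> G -> R.

Definition ball (x : G) (r : R) : G -> Prop := fun y => d x y < r.

Definition d_open (U : G -> Prop) : Prop :=
  forall x, U x -> exists r, 0 < r /\ forall y, d x y < r -> U y.

Definition d_compact (K : G -> Prop) : Prop :=
  forall (I : Type) (U : I -> G -> Prop),
    (forall i, d_open (U i)) -> (forall x, K x -> exists i, U i x) ->
    exists l : list I, forall x, K x -> exists i, In i l /\ U i x.

Definition d_locally_compact : Prop :=
  forall x, exists K U, d_compact K /\ d_open U /\ U x /\ (forall y, U y -> K y).

Definition d_second_countable : Prop :=
  exists B : nat -> G -> Prop, (forall n, d_open (B n)) /\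
    forall U, d_open U -> forall x, U x -> exists n, B n x /\ (forall y, B n y -> U y).

Definition d_connected : Prop :=
  forall U, d_open U -> d_open (fun x => ~ U x) -> (forall x, U x) \/ (forall x, ~ U x).

Definition d_continuous (f : G -> G) : Prop :=
  forall x eps, 0 < eps -> exists del, 0 < del /\
    forall y, d x y < del -> d (f x) (f y) < eps.

Definition d_continuous2 (f : G -> G -> G) : Prop :=
  forall x y eps, 0 < eps -> exists del, 0 < del /\
    forall x' y', d x x' < del -> d y y' < del -> d (f x y) (f x' y') < eps.

Definition d_bounded (V : G -> Prop) : Prop :=
  exists x0 r, forall v, V v -> d x0 v <= r.

Definition d_Borel (X : G -> Prop) : Prop :=
  forall F : (G -> Prop) -> Prop,
    (forall U, d_open U -> F U) ->
    (forall Y, F Y -> F (fun x => ~ Y x)) ->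
    (forall Y : nat -> G -> Prop, (forall n, F (Y n)) -> F (fun x => exists n, Y n x)) ->
    F X.

Definition is_metric : Prop :=
  (forall x y, 0 <= d x y) /\ (forall x y, d x y = 0 <-> x = y) /\
  (forall x y, d x y = d y x) /\ (forall x y z, d x z <= d x y + d y z).

End Topology.

Section Dilation.
Variables (G : Type) (mul : G -> G -> G) (inv : G -> G) (e : G) (d : G -> G -> R).

Definition is_group : Prop :=
  (forall x y z, mul x (mul y z) = mul (mul x y) z) /\
  (forall x, mul e x = x) /\ (forall x, mul x e = x) /\
  (forall x, mul (inv x) x = e) /\ (forall x, mul x (inv x) = e).

Definition is_top_aut (f : G -> G) : Prop :=
  (forall x y, f (mul x y) = mul (f x) (f y)) /\
  (forall x y, f x = f y -> x = y) /\ (forall y, exists x, f x = y) /\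
  d_continuous d f /\
  (forall U, d_open d U -> d_open d (fun y => exists x, U x /\ f x = y)).

Definition is_subgroup (Gam : G -> Prop) : Prop :=
  Gam e /\ (forall x y, Gam x -> Gam y -> Gam (mul x y)) /\
  (forall x, Gam x -> Gam (inv x)).

Definition uniform_lattice (Gam : G -> Prop) : Prop :=
  is_subgroup Gam /\
  (forall g, Gam g -> exists r, 0 < r /\ forall h, Gam h -> d g h < r -> h = g) /\
  (exists K, d_compact d K /\ forall g, exists gam k, Gam gam /\ K k /\ g = mul gam k).

Definition dilation_datum (D : R -> G -> G) (Gam V : G -> Prop) : Prop :=
  is_group /\ is_metric d /\
  (forall g x y, d (mul g x) (mul g y) = d x y) /\
  d_continuous2 d mul /\ d_continuous d inv /\
  d_connected d /\ d_locally_compact d /\ d_second_countable d /\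
  (forall l, 0 < l -> is_top_aut (D l)) /\
  (forall l m, 0 < l -> 0 < m -> forall x, D (l * m) x = D l (D m x)) /\
  (forall l, 0 < l -> forall g h, d (D l g) (D l h) = l * d g h) /\
  uniform_lattice Gam /\
  (exists l, 1 < l /\ forall g, Gam g -> Gam (D l g)) /\
  d_bounded d V /\ d_Borel d V /\
  (exists U, d_open d U /\ U e /\ forall x, U x -> V x) /\
  (* G is the disjoint union of the translates gamma V, gamma in Gamma *)
  (forall g, exists gam, Gam gam /\ V (mul (inv gam) g) /\
     forall gam', Gam gam' -> V (mul (inv gam') g) -> gam' = gam).

(* Patches: a patch P in A^M (M a subset of Gamma) is encoded as a map
   G -> option A with support M = {x | P x <> None}. *)
Definition is_patch (A : Type) (Gam : G -> Prop) (P : G -> option A) : Prop :=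
  forall x, P x <> None -> Gam x.

Definition is_full_patch (A : Type) (Gam : G -> Prop) (P : G -> option A) : Prop :=
  forall x, Gam x <-> P x <> None.

Definition supp (A : Type) (P : G -> option A) : G -> Prop := fun x => P x <> None.

Definition translate (A : Type) (gam : G) (P : G -> option A) : G -> option A :=
  fun x => P (mul (inv gam) x).

Definition point_patch (A : Type) (a : A) : G -> option A :=
  fun x => if excluded_middle_informative (x = e) then Some a else None.

Definition restrict (A : Type) (P : G -> option A) (M : G -> Prop) : G -> option A :=
  fun x => match P x with Some a => (if excluded_middle_informative (M x) then Some a else None) | None => None end.


Definition finite_type (A : Type) : Prop := exists l : list A, forall a, In a l.

Definition substitution_datum (D : R -> G -> G) (Gam V : G -> Prop)
    (A : Type) (lam0 : R) (S0 : A -> G -> option A) : Prop :=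
  finite_type A /\
  (exists rm rp, 0 < rm /\ rm < rp /\
     (forall x, ball d e rm x -> V x) /\ (forall x, V x -> ball d e rp x) /\
     1 + rp / rm < lam0) /\
  (forall g, Gam g -> Gam (D lam0 g)) /\
  (forall a x, S0 a x <> None <-> (Gam x /\ exists v, V v /\ x = D lam0 v)).

(* S is (on patches) the substitution map of the Construction:
   supp S(P) = D(MV) cap Gamma, and S(P)(gamma) = S0(P(eta))(D(eta)^-1 gamma)
   for eta in M = supp P with gamma in D(eta)(D(V) cap Gamma), i.e.
   gamma = D(eta) delta with delta in D(V) cap Gamma. *)
Definition is_construction (D : R -> G -> G) (Gam V : G -> Prop)
    (A : Type) (lam0 : R) (S0 : A -> G -> option A)
    (S : (G -> option A) -> (G -> option A)) : Prop :=
  forall P, is_patch Gam P ->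
    (forall x, S P x <> None <->
        (Gam x /\ exists m v, P m <> None /\ V v /\ x = D lam0 (mul m v))) /\
    (forall eta a del, P eta = Some a -> Gam del ->
        (exists v, V v /\ del = D lam0 v) ->
        S P (mul (D lam0 eta) del) = S0 a del).

(* continuity of S restricted to A^Gamma, for the product topology
   (A discrete); opens of A^Gamma: unions of cylinder sets over finite F *)
Definition prod_open (A : Type) (Gam : G -> Prop) (U : (G -> option A) -> Prop) : Prop :=
  (forall P, U P -> is_full_patch Gam P) /\
  forall P, U P -> exists F : list G, (forall x, In x F -> Gam x) /\
    forall Q, is_full_patch Gam Q -> (forall x, In x F -> Q x = P x) -> U Q.

Definition prod_continuous (A : Type) (Gam : G -> Prop)
    (S : (G -> option A) -> (G -> option A)) : Prop :=
  forall U, prod_open Gam U ->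
    prod_open Gam (fun P => is_full_patch Gam P /\ U (S P)).

End Dilation.

(* Main.v *)
Require Import Defs.
From Stdlib Require Import Reals List Lra.
From Stdlib Require Import ClassicalDescription IndefiniteDescription FunctionalExtensionality.
Open Scope R_scope.

Definition Ssub (G A : Type) (mul : G -> G -> G) (inv : G -> G) (Dl : G -> G)
  (Gam : G -> Prop) (S0 : A -> G -> option A) (P : G -> option A) (x : G) : option A :=
  match excluded_middle_informative
    (exists p : G * A, Gam (fst p) /\ P (fst p) = Some (snd p) /\
        S0 (snd p) (mul (inv (Dl (fst p))) x) <> None) with
  | left H => let p := proj1_sig (constructive_indefinite_description _ H) in
              S0 (snd p) (mul (inv (Dl (fst p))) x)
  | right _ => None
  end.

Arguments Ssub {G A}.

Lemma Ssub_char (G A : Type) (mul : G -> G -> G) (inv : G -> G) (Dl : G -> G)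
  (Gam : G -> Prop) (S0 : A -> G -> option A)
  (huniq : forall eta eta' a a' x, Gam eta -> Gam eta' ->
      S0 a (mul (inv (Dl eta)) x) <> None -> S0 a' (mul (inv (Dl eta')) x) <> None ->
      eta = eta')
  (P : G -> option A) (x : G) (b : A) :
  Ssub mul inv Dl Gam S0 P x = Some b <->
  exists eta a, Gam eta /\ P eta = Some a /\ S0 a (mul (inv (Dl eta)) x) = Some b.
Proof.
  unfold Ssub. destruct excluded_middle_informative as [H|H].
  - destruct (constructive_indefinite_description _ H) as [[eta a] [h1 [h2 h3]]]; simpl in *.
    split.
    + intros Hb. exists eta, a. auto.
    + intros [eta' [a' [g1 [g2 g3]]]].
      assert (eta = eta') as <-.
      { apply (huniq eta eta' a a' x); auto. rewrite g3; discriminate. }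
      rewrite h2 in g2. injection g2 as <-. exact g3.
  - split; [discriminate|].
    intros [eta [a [g1 [g2 g3]]]]. exfalso. apply H. exists (eta, a). simpl.
    rewrite g3. repeat split; auto. discriminate.
Qed.

Lemma opt_ext (A : Type) (o1 o2 : option A) :
  (forall b, o1 = Some b <-> o2 = Some b) -> o1 = o2.
Proof.
  intros H. destruct o1 as [a|], o2 as [c|]; auto.
  - apply H. reflexivity.
  - exfalso. assert (None = Some a) by (apply H; reflexivity). discriminate.
  - exfalso. assert (None = Some c) by (apply H; reflexivity). discriminate.
Qed.

Lemma list_witness (G : Type) (Pr : G -> G -> Prop) (F : list G) :
  (forall x, In x F -> exists y, Pr x y) ->
  exists F', (forall y, In y F' -> exists x, Pr x y) /\
    forall x, In x F -> exists y, In y F' /\ Pr x y.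
Proof.
  induction F as [|x F IH]; intros H.
  - exists nil. split; intros x [].
  - destruct IH as [F' [HF0 HF']]. { intros y Hy. apply H. right. exact Hy. }
    destruct (H x (or_introl eq_refl)) as [y Hy].
    exists (y :: F'). split.
    { intros w [<-|Hw]; [exists x; exact Hy|exact (HF0 w Hw)]. }
    intros z [<-|Hz].
    + exists y. split; [left; reflexivity|exact Hy].
    + destruct (HF' z Hz) as [w [Hw1 Hw2]]. exists w. split; [right; exact Hw1|exact Hw2].
Qed.

Theorem proposition2 (G : Type) (mul : G -> G -> G) (inv : G -> G) (e : G)
    (d : G -> G -> R) (D : R -> G -> G) (Gam V : G -> Prop)
    (A : Type) (lam0 : R) (S0 : A -> G -> option A)
    (hdil : dilation_datum mul inv e d D Gam V)
    (hsub : substitution_datum e d D Gam V lam0 S0) :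
  let E1 (S : (G -> option A) -> (G -> option A)) :=
    forall a, S (point_patch e a) = S0 a in
  let E2 (S : (G -> option A) -> (G -> option A)) :=
    forall gam P, Gam gam -> is_patch Gam P ->
      (forall x, supp (S (translate mul inv gam P)) x <->
                 exists y, supp (S P) y /\ x = mul (D lam0 gam) y) /\
      S (translate mul inv gam P) = translate mul inv (D lam0 gam) (S P) in
  let E3 (S : (G -> option A) -> (G -> option A)) :=
    forall (I : Type) (M : I -> G -> Prop) (P : G -> option A),
      (forall i x, M i x -> Gam x) ->
      (forall x, supp P x <-> exists i, M i x) ->
      (forall x, supp (S P) x <-> exists i, supp (S (restrict P (M i))) x) /\
      (forall i x, supp (S (restrict P (M i))) x -> S P x = S (restrict P (M i)) x) in
  exists S : (G -> option A) -> (G -> option A),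
    (forall P, is_patch Gam P -> is_patch Gam (S P)) /\
    E1 S /\ E2 S /\ E3 S /\
    (forall S' : (G -> option A) -> (G -> option A),
       (forall P, is_patch Gam P -> is_patch Gam (S' P)) ->
       E1 S' -> E2 S' -> E3 S' ->
       forall P, is_patch Gam P -> S' P = S P) /\
    is_construction mul D Gam V lam0 S0 S /\
    (forall P gam (n : nat), is_patch Gam P -> Gam gam ->
       Nat.iter n S (translate mul inv gam P) =
       translate mul inv (Nat.iter n (D lam0) gam) (Nat.iter n S P)) /\
    (forall P, is_full_patch Gam P -> is_full_patch Gam (S P)) /\
    prod_continuous Gam S.
Proof.
  cbv zeta.
  destruct hdil as [Hgrp [_ [_ [_ [_ [_ [_ [_ [Haut [_ [_ [Hlat [_ [_ [_ [_ Htile]]]]]]]]]]]]]]]].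
  destruct Hgrp as [Hassoc [Hel [Her [Hil Hir]]]].
  destruct Hlat as [[Ge [Gmul Ginv]] _].
  destruct hsub as [_ [[rm [rp [Hrm [Hrmp [_ [_ Hlam]]]]]] [GD HS0]]].
  assert (Hl0 : 0 < lam0).
  { assert (0 < rp / rm) by (apply Rdiv_lt_0_compat; lra). lra. }
  destruct (Haut lam0 Hl0) as [Dmul [Dinj [Dsurj _]]].
  set (Dl := D lam0) in *.
  assert (cancL : forall a x, mul (inv a) (mul a x) = x).
  { intros a x. rewrite Hassoc, Hil, Hel. reflexivity. }
  assert (cancL' : forall a x, mul a (mul (inv a) x) = x).
  { intros a x. rewrite Hassoc, Hir, Hel. reflexivity. }
  assert (invu : forall z w, mul z w = e -> z = inv w).
  { intros z w H. rewrite <- (Her z), <- (Hir w), Hassoc, H, Hel. reflexivity. }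
  assert (invM : forall a b, inv (mul a b) = mul (inv b) (inv a)).
  { intros a b. symmetry. apply invu.
    rewrite <- Hassoc, (Hassoc (inv a)), Hil, Hel, Hil. reflexivity. }
  assert (idem : forall y, mul y y = y -> y = e).
  { intros y H. rewrite <- (cancL y y), H, Hil. reflexivity. }
  assert (De : Dl e = e).
  { apply idem. rewrite <- Dmul, Hel. reflexivity. }
  assert (inve : inv e = e).
  { symmetry. apply invu. apply Hel. }
  assert (eqinv : forall a x, mul (inv a) x = e <-> x = a).
  { intros a x. split.
    - intros H. rewrite <- (cancL' a x), H, Her. reflexivity.
    - intros ->. apply Hil. }
  assert (huniq : forall eta eta' a a' x, Gam eta -> Gam eta' ->
      S0 a (mul (inv (Dl eta)) x) <> None -> S0 a' (mul (inv (Dl eta')) x) <> None ->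
      eta = eta').
  { intros eta eta' a a' x g1 g2 h1 h2.
    apply HS0 in h1. apply HS0 in h2.
    destruct h1 as [_ [v [Hv Ev]]]. destruct h2 as [_ [v' [Hv' Ev']]].
    assert (Ex : x = Dl (mul eta v)).
    { rewrite Dmul. fold Dl in Ev. rewrite <- Ev, cancL'. reflexivity. }
    assert (Ex' : x = Dl (mul eta' v')).
    { rewrite Dmul. fold Dl in Ev'. rewrite <- Ev', cancL'. reflexivity. }
    rewrite Ex in Ex'. apply Dinj in Ex'.
    destruct (Htile (mul eta v)) as [gam [_ [_ U]]].
    transitivity gam.
    - apply U; auto. rewrite cancL. exact Hv.
    - symmetry. apply U; auto. rewrite Ex', cancL. exact Hv'. }
  pose (S := Ssub mul inv Dl Gam S0).
  assert (char : forall P x b, S P x = Some b <->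
     exists eta a, Gam eta /\ P eta = Some a /\ S0 a (mul (inv (Dl eta)) x) = Some b).
  { intros. apply Ssub_char. exact huniq. }
  assert (supp_char : forall P x, S P x <> None <->
     exists eta a, Gam eta /\ P eta = Some a /\ S0 a (mul (inv (Dl eta)) x) <> None).
  { intros P x. split.
    - intros H. destruct (S P x) as [b|] eqn:Hb; [|congruence].
      apply char in Hb. destruct Hb as [eta [a [h1 [h2 h3]]]].
      exists eta, a. rewrite h3. repeat split; auto; discriminate.
    - intros [eta [a [h1 [h2 h3]]]]. destruct (S0 a (mul (inv (Dl eta)) x)) as [b|] eqn:Hb; [|congruence].
      assert (S P x = Some b) by (apply char; eauto). congruence. }
  assert (Dinv : forall g, Dl (inv g) = inv (Dl g)).
  { intros g. apply invu. rewrite <- Dmul, Hil. exact De. }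
  assert (invinv : forall a, inv (inv a) = a).
  { intros a. symmetry. apply invu. apply Hir. }
  assert (hpatch : forall P, is_patch Gam (S P)).
  { intros P x H. apply supp_char in H. destruct H as [eta [a [g1 [g2 g3]]]].
    apply HS0 in g3. destruct g3 as [gy _]. rewrite <- (cancL' (Dl eta) x).
    apply Gmul; auto. }
  assert (hE1 : forall a, S (point_patch e a) = S0 a).
  { intros a. apply functional_extensionality; intros x. apply opt_ext; intros b. rewrite char. split.
    - intros [eta [a' [g1 [g2 g3]]]]. unfold point_patch in g2.
      destruct excluded_middle_informative as [->|]; [|discriminate].
      injection g2 as <-. rewrite De, inve, Hel in g3. exact g3.
    - intros H. exists e, a. rewrite De, inve, Hel. split; [exact Ge|]. split; [|exact H].
      unfold point_patch. destruct excluded_middle_informative; congruence. }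
  assert (hE2eq : forall gam P, Gam gam ->
     S (translate mul inv gam P) = translate mul inv (Dl gam) (S P)).
  { intros gam P g. apply functional_extensionality; intros x. apply opt_ext; intros b.
    unfold translate. split; intros H; apply char; apply char in H.
    - destruct H as [eta [a [g1 [g2 g3]]]]. exists (mul (inv gam) eta), a.
      split; [apply Gmul; auto|]. split; [exact g2|].
      rewrite Dmul, Dinv, invM, invinv, <- Hassoc, (Hassoc (Dl gam)), Hir, Hel. exact g3.
    - destruct H as [eta [a [g1 [g2 g3]]]]. exists (mul gam eta), a.
      split; [apply Gmul; auto|]. rewrite cancL. split; [exact g2|].
      rewrite Dmul, invM, <- Hassoc. exact g3. }
  assert (hE2 : forall gam P, Gam gam -> is_patch Gam P ->
      (forall x, supp (S (translate mul inv gam P)) x <->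
                 exists y, supp (S P) y /\ x = mul (Dl gam) y) /\
      S (translate mul inv gam P) = translate mul inv (Dl gam) (S P)).
  { intros gam P g _. split; [|apply hE2eq; exact g].
    intros x. rewrite hE2eq by exact g. unfold supp, translate. split.
    - intros H. exists (mul (inv (Dl gam)) x). split; [exact H|]. rewrite cancL'. reflexivity.
    - intros [y [Hy ->]]. rewrite cancL. exact Hy. }
  assert (rest_char : forall (P : G -> option A) M x a, restrict P M x = Some a <-> P x = Some a /\ M x).
  { intros P M x a. unfold restrict. destruct (P x); [destruct excluded_middle_informative|];
    split; intuition congruence. }
  assert (hE3 : forall (I : Type) (M : I -> G -> Prop) (P : G -> option A),
      (forall i x, M i x -> Gam x) ->
      (forall x, supp P x <-> exists i, M i x) ->
      (forall x, supp (S P) x <-> exists i, supp (S (restrict P (M i))) x) /\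
      (forall i x, supp (S (restrict P (M i))) x -> S P x = S (restrict P (M i)) x)).
  { intros I M P HM Hcov.
    assert (f1 : forall i x b, S (restrict P (M i)) x = Some b -> S P x = Some b).
    { intros i x b H. apply char in H. apply char.
      destruct H as [eta [a [g1 [g2 g3]]]]. apply rest_char in g2. exists eta, a. tauto. }
    assert (f2 : forall x b, S P x = Some b -> exists i, S (restrict P (M i)) x = Some b).
    { intros x b H. apply char in H. destruct H as [eta [a [g1 [g2 g3]]]].
      destruct (proj1 (Hcov eta)) as [i Hi]. { unfold supp. congruence. }
      exists i. apply char. exists eta, a. rewrite rest_char. tauto. }
    unfold supp. split.
    - intros x. split.
      + intros H. destruct (S P x) as [b|] eqn:Hb; [|congruence].
        destruct (f2 x b Hb) as [i Hi]. exists i. congruence.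
      + intros [i Hi]. destruct (S (restrict P (M i)) x) as [b|] eqn:Hb; [|congruence].
        rewrite (f1 i x b Hb). discriminate.
    - intros i x H. destruct (S (restrict P (M i)) x) as [b|] eqn:Hb; [|congruence].
      exact (f1 i x b Hb). }
  assert (ppatch : forall a : A, is_patch Gam (point_patch e a)).
  { intros a x H. unfold point_patch in H. destruct excluded_middle_informative; [subst; exact Ge|congruence]. }
  assert (hcons : is_construction mul D Gam V lam0 S0 S).
  { intros P HP. split.
    - intros x. rewrite supp_char. split.
      + intros [eta [a [g1 [g2 g3]]]]. pose proof g3 as g3'. apply HS0 in g3'.
        destruct g3' as [gy [v [Hv Ev]]]. split.
        { rewrite <- (cancL' (Dl eta) x). apply Gmul; auto. }
        exists eta, v. split; [congruence|]. split; [exact Hv|].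
        fold Dl in Ev |- *. rewrite Dmul, <- Ev, cancL'. reflexivity.
      + intros [gx [m [v [Pm [Hv Ex]]]]]. destruct (P m) as [a|] eqn:Pa; [|congruence].
        assert (gm : Gam m) by (apply HP; congruence).
        exists m, a. split; [exact gm|]. split; [exact Pa|].
        assert (Exv : mul (inv (Dl m)) x = Dl v).
        { fold Dl in Ex. rewrite Ex, Dmul, cancL. reflexivity. }
        rewrite Exv. apply HS0. split.
        * rewrite <- Exv. apply Gmul; auto.
        * exists v. auto.
    - intros eta a del Pe gdel [v [Hv Ev]].
      assert (geta : Gam eta) by (apply HP; congruence).
      destruct (S0 a del) as [b|] eqn:Hb.
      + apply char. exists eta, a. fold Dl. rewrite cancL. auto.
      + exfalso. apply (proj2 (HS0 a del)); [|exact Hb]. split; [exact gdel|]. exists v. auto. }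
  assert (hfull : forall P, is_full_patch Gam P -> is_full_patch Gam (S P)).
  { intros P HP x. split.
    - intros gx. destruct (Dsurj x) as [g Eg]. destruct (Htile g) as [gam [ggam [Vg _]]].
      assert (patchP : is_patch Gam P) by (intros y H; apply HP; exact H).
      apply (proj2 (proj1 (hcons P patchP) x)). split; [exact gx|].
      exists gam, (mul (inv gam) g). split; [apply HP; exact ggam|]. split; [exact Vg|].
      rewrite cancL'. symmetry. exact Eg.
    - intros H. apply hpatch with P. exact H. }
  exists S. split; [intros P _; apply hpatch|].
  split; [exact hE1|]. split; [exact hE2|]. split; [exact hE3|].
  split.
  { intros S' hp' e1 e2 e3 P HP.
    pose (I := {eta : G | supp P eta}).
    pose (M := fun (i : I) x => x = proj1_sig i).
    assert (Hmi : forall i x, M i x -> Gam x).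
    { intros [y Hy] x Hx. unfold M in Hx; simpl in Hx. subst. apply HP. exact Hy. }
    assert (Hcov : forall x, supp P x <-> exists i, M i x).
    { intros x. split.
      - intros H. exists (exist _ x H). reflexivity.
      - intros [[y Hy] Hx]. unfold M in Hx; simpl in Hx. subst. exact Hy. }
    assert (hrest : forall i, S' (restrict P (M i)) = S (restrict P (M i))).
    { intros [eta Heta]. unfold M; simpl.
      destruct (P eta) as [a|] eqn:Pa; [|unfold supp in Heta; contradiction].
      assert (geta : Gam eta) by (apply HP; congruence).
      assert (Er : restrict P (fun x => x = eta) = translate mul inv eta (point_patch e a)).
      { apply functional_extensionality; intros x. unfold restrict, translate, point_patch.
        destruct (excluded_middle_informative (mul (inv eta) x = e)) as [h|h];
        rewrite eqinv in h.
        - subst x. rewrite Pa. destruct excluded_middle_informative; congruence.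
        - destruct (P x); [|reflexivity]. destruct excluded_middle_informative; congruence. }
      rewrite Er, (proj2 (e2 eta _ geta (ppatch a))), (proj2 (hE2 eta _ geta (ppatch a))), e1, hE1.
      reflexivity. }
    destruct (e3 I M P Hmi Hcov) as [A1 A2]. destruct (hE3 I M P Hmi Hcov) as [B1 B2].
    apply functional_extensionality; intros x.
    destruct (S P x) as [b|] eqn:h1.
    - destruct (proj1 (B1 x)) as [i Hi]. { unfold supp. congruence. }
      rewrite <- hrest in Hi. rewrite (A2 i x Hi), hrest, <- B2; [exact h1|].
      rewrite <- hrest. exact Hi.
    - destruct (S' P x) as [b|] eqn:h2; [|reflexivity]. exfalso.
      destruct (proj1 (A1 x)) as [i Hi]. { unfold supp. congruence. }
      rewrite hrest in Hi. apply (proj2 (B1 x)); [exists i; exact Hi|exact h1]. }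
  split; [exact hcons|].
  split.
  { intros P gam n HP g.
    assert (gn : forall n, Gam (Nat.iter n Dl gam)).
    { induction n0; simpl; auto. }
    induction n; simpl; [reflexivity|].
    rewrite IHn. apply hE2eq. apply gn. }
  split; [exact hfull|].
  intros U [HU1 HU2]. split.
  - intros P [HP _]. exact HP.
  - intros P [HP HUP]. destruct (HU2 _ HUP) as [F [HF HQ]].
    assert (W : forall x, In x F -> exists eta, Gam eta /\ exists a b, P eta = Some a /\
        S0 a (mul (inv (Dl eta)) x) = Some b /\ S P x = Some b).
    { intros x Hx. assert (gx := HF x Hx). apply (hfull P HP) in gx.
      destruct (S P x) as [b|] eqn:Hb; [|congruence]. pose proof Hb as Hb'.
      apply char in Hb'. destruct Hb' as [eta [a [g1 [g2 g3]]]].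
      exists eta. split; [exact g1|]. exists a, b. auto. }
    destruct (list_witness _ (fun x eta => Gam eta /\ exists a b, P eta = Some a /\
        S0 a (mul (inv (Dl eta)) x) = Some b /\ S P x = Some b) F W) as [F' [HF0 HF']].
    exists F'. split.
    + intros y Hy. destruct (HF0 y Hy) as [x [g _]]. exact g.
    + intros Q HQf HQP. split; [exact HQf|]. apply HQ; [apply hfull; exact HQf|].
      intros x Hx. destruct (HF' x Hx) as [eta [Hin [g [a [b [Pa [Sa SPx]]]]]]].
      rewrite SPx. apply char. exists eta, a. rewrite HQP; auto.
Qed.
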